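(* Let $\mathbb{F}_q$ be a finite field. For any sets $\mathcal{A},\mathcal{B},\mathcal{C}\subseteq\mathbb{F}_q$ with $A=\#\mathcal{A}$ and any nontrivial additive character $\psi$ of $\mathbb{F}_q$, $$|S_\psi(\mathcal{A},\mathcal{B},\mathcal{C})|\le A^{1/2}\,\mathrm{E}(\mathcal{B})^{1/4}\,\mathrm{E}(\mathcal{C})^{1/4}\,q^{1/2}.$$
   Context: $S_\psi(\mathcal{A},\mathcal{B},\mathcal{C})=\sum_{a\in\mathcal{A}}\sum_{b\in\mathcal{B}}\sum_{c\in\mathcal{C}}\psi(ab+ac+bc)$. $\mathrm{E}(\mathcal{U})=\#\{(u_1,u_2,u_3,u_4)\in\mathcal{U}^4:u_1+u_2=u_3+u_4\}$. *)

(* Defs.v *)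
From HB Require Import structures.
From mathcomp Require Import all_boot all_order all_algebra all_field.
Set Implicit Arguments. Unset Strict Implicit. Unset Printing Implicit Defensive.
Import Order.TTheory GRing.Theory Num.Theory.
Local Open Scope ring_scope.

(* An additive character of F: a group homomorphism (F,+) -> C^x, with C
   represented by the algebraic complex numbers algC. *)
Definition additive_character (F : finFieldType) (psi : F -> algC) : Prop :=
  (forall x y : F, psi (x + y) = psi x * psi y) /\ (forall x : F, psi x != 0).

Definition nontrivial_character (F : finFieldType) (psi : F -> algC) : Prop :=
  exists x : F, psi x != 1.

Definition S_psi (F : finFieldType) (psi : F -> algC) (A B C : {set F}) : algC :=
  \sum_(a in A) \sum_(b in B) \sum_(c in C) psi (a * b + a * c + b * c).

Definition energy (F : finFieldType) (U : {set F}) : nat :=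
  #|[set u : F * F * F * F |
      [&& u.1.1.1 \in U, u.1.1.2 \in U, u.1.2 \in U, u.2 \in U &
          u.1.1.1 + u.1.1.2 == u.1.2 + u.2]]|.

(* Main.v *)
Require Import Defs.
From HB Require Import structures.
From mathcomp Require Import all_boot all_order all_algebra all_field.
From mathcomp Require Import ring.
Import Order.TTheory GRing.Theory Num.Theory.
Set Implicit Arguments. Unset Strict Implicit.
Local Open Scope ring_scope.

Section Psi.
Variables (F : finFieldType) (psi : F -> algC).
Hypothesis hpsi : additive_character psi.

Lemma psiD x y : psi (x + y) = psi x * psi y.
Proof. by case: hpsi. Qed.

Lemma psi0 : psi 0 = 1.
Proof.
have h0 : psi 0 != 0 by case: hpsi.
by apply: (mulfI h0); rewrite mulr1 -psiD addr0.
Qed.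

Lemma psiMn x n : psi (x *+ n) = psi x ^+ n.
Proof. elim: n => [|n IH]; first by rewrite mulr0n expr0 psi0.
by rewrite mulrS exprS psiD IH. Qed.

Lemma norm_psi x : `|psi x| = 1.
Proof.
case: (finPcharP F) => p pp pc.
have : psi x ^+ p = 1 by rewrite -psiMn (mulrn_pchar pc) psi0.
move=> /(congr1 (fun z => `|z|)); rewrite normrX normr1 => /eqP.
by rewrite pexpr_eq1 ?prime_gt0 // => /eqP.
Qed.

Lemma conj_psi x : (psi x)^* = psi (- x).
Proof.
have h0 : psi x != 0 by case: hpsi.
apply: (mulfI h0); rewrite -normCK norm_psi expr1n -psiD subrr psi0 //.
Qed.

Lemma sum_psi_lin t (hnt : nontrivial_character psi) :
  \sum_(a : F) psi (a * t) = if t == 0 then #|F|%:R else 0.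
Proof.
case: eqP => [->|/eqP tn0].
  by under eq_bigr do rewrite mulr0 psi0; rewrite sumr_const.
suff hs : \sum_a psi a = 0.
  by rewrite -[RHS]hs [RHS](reindex_inj (mulIf tn0)).
case: hnt => x0 hx0.
have: psi x0 * \sum_a psi a = \sum_a psi a.
  by rewrite mulr_sumr [RHS](reindex_inj (addrI x0)) /=; apply: eq_bigr => a _; rewrite psiD.
move/eqP; rewrite -subr_eq0 -{2}[\sum_a psi a]mul1r -mulrBl mulf_eq0 subr_eq0.
by rewrite (negbTE hx0) /= => /eqP.
Qed.
End Psi.

Lemma amgm (R : numDomainType) (x y : R) : 0 <= x -> 0 <= y ->
  2 * x * y <= x ^+ 2 + y ^+ 2.
Proof.
move=> hx hy.
have hr : x - y \is Num.real by rewrite realB ?ger0_real.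
move: hr; rewrite realEsqr sqrrB -subr_ge0.
have -> : x ^+ 2 + y ^+ 2 - 2 * x * y = x ^+ 2 - x * y *+ 2 + y ^+ 2 by ring.
by [].
Qed.

Lemma cs (R : numDomainType) (I : finType) (P : pred I) (u v : I -> R) :
  (forall i, 0 <= u i) -> (forall i, 0 <= v i) ->
  (\sum_(i | P i) u i * v i) ^+ 2 <=
  (\sum_(i | P i) u i ^+ 2) * (\sum_(i | P i) v i ^+ 2).
Proof.
move=> hu hv.
have dbl : forall f g : I -> R, (\sum_(i | P i) f i) * (\sum_(i | P i) g i)
   = \sum_(i | P i) \sum_(j | P j) f i * g j.
  by move=> f g; rewrite mulr_suml; apply: eq_bigr => i _; rewrite mulr_sumr.
rewrite expr2 !dbl -(@ler_pM2l _ 2) ?ltr0n //.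
have -> : 2 * (\sum_(i | P i) \sum_(j | P j) u i ^+ 2 * v j ^+ 2) =
  \sum_(i | P i) \sum_(j | P j) ((u i * v j) ^+ 2 + (u j * v i) ^+ 2).
  rewrite mulr_natl mulr2n [X in _ + X = _]exchange_big -big_split /=.
  by apply: eq_bigr => i _; rewrite -big_split /=; apply: eq_bigr => j _; rewrite !exprMn.
rewrite mulr_sumr; apply: ler_sum => i _; rewrite mulr_sumr; apply: ler_sum => j _.
have -> : 2 * (u i * v i * (u j * v j)) = 2 * (u i * v j) * (u j * v i) by ring.
by apply: amgm; apply: mulr_ge0.
Qed.

Section Step2.
Variables (F : finFieldType) (psi : F -> algC) (B C : {set F}).
Hypothesis hpsi : additive_character psi.
Hypothesis hnt : nontrivial_character psi.

Definition T a := \sum_(b in B) \sum_(c in C) psi (a * b + a * c + b * c).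
Definition NN := (\sum_(b in B) \sum_(c in C) \sum_(b' in B) \sum_(c' in C)
    ((b + c)%R == (b' + c')%R))%N.

Lemma conj_sum (I : finType) (P : pred I) (f : I -> algC) :
  (\sum_(i | P i) f i)^* = \sum_(i | P i) (f i)^*.
Proof. by rewrite raddf_sum. Qed.

Lemma normT2 a : `|T a| ^+ 2 = \sum_(b in B) \sum_(c in C) \sum_(b' in B) \sum_(c' in C)
   psi (b * c - b' * c') * psi (a * ((b + c) - (b' + c'))).
Proof.
rewrite normCK /T. rewrite conj_sum mulr_suml; apply: eq_bigr => b _.
rewrite mulr_suml; apply: eq_bigr => c _.
rewrite mulr_sumr; apply: eq_bigr => b' _.
rewrite conj_sum mulr_sumr; apply: eq_bigr => c' _.
rewrite conj_psi // -!(psiD hpsi); congr psi; ring.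
Qed.

Lemma step2 : \sum_a `|T a| ^+ 2 <= #|F|%:R * NN%:R.
Proof.
rewrite -[X in X <= _]ger0_norm; last by apply: sumr_ge0 => a _; rewrite exprn_ge0.
under eq_bigr do rewrite normT2.
have -> : \sum_a \sum_(b in B) \sum_(c in C) \sum_(b' in B) \sum_(c' in C)
   psi (b * c - b' * c') * psi (a * ((b + c) - (b' + c'))) =
   \sum_(b in B) \sum_(c in C) \sum_(b' in B) \sum_(c' in C)
   psi (b * c - b' * c') * (if (b + c) - (b' + c') == 0 then #|F|%:R else 0).
  rewrite exchange_big; apply: eq_bigr => b _.
  rewrite exchange_big; apply: eq_bigr => c _.
  rewrite exchange_big; apply: eq_bigr => b' _.
  rewrite exchange_big; apply: eq_bigr => c' _.
  rewrite -mulr_sumr; congr (_ * _).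
  exact: sum_psi_lin.
rewrite /NN natr_sum mulr_sumr.
apply: le_trans (ler_norm_sum _ _ _) _; apply: ler_sum => b _.
rewrite natr_sum mulr_sumr.
apply: le_trans (ler_norm_sum _ _ _) _; apply: ler_sum => c _.
rewrite natr_sum mulr_sumr.
apply: le_trans (ler_norm_sum _ _ _) _; apply: ler_sum => b' _.
rewrite natr_sum mulr_sumr.
apply: le_trans (ler_norm_sum _ _ _) _; apply: ler_sum => c' _.
rewrite normrM norm_psi // mul1r subr_eq0.
by case: (_ == _); rewrite ?normr0 ?mulr0 ?mulr1 ?normr_nat.
Qed.
End Step2.

Lemma energyE (F : finFieldType) (U : {set F}) : energy U =
  (\sum_(u1 in U) \sum_(u2 in U) \sum_(u3 in U) \sum_(u4 in U)
    ((u1 + u2)%R == (u3 + u4)%R))%N.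
Proof.
rewrite /energy -sum1_card pair_big pair_big pair_big /=.
rewrite big_mkcond [RHS]big_mkcond /=; apply: eq_bigr => [[[[u1 u2] u3] u4]] _ /=.
rewrite inE /=.
by case: (u1 \in U); case: (u2 \in U); case: (u3 \in U); case: (u4 \in U).
Qed.

Lemma sumx_eq (T : finType) (a b : T) : (\sum_x ((a == x) * (b == x)))%N = (a == b).
Proof.
rewrite (bigD1 a) //= eqxx mul1n big1 ?addn0 1?eq_sym //.
by move=> x /negbTE hx; rewrite eq_sym hx.
Qed.

Definition dd (F : finFieldType) (U : {set F}) (x : F) :=
  (\sum_(u1 in U) \sum_(u2 in U) ((u1 - u2)%R == x))%N.

Lemma sum_dd (F : finFieldType) (P Q : {set F}) :
  (\sum_x dd P x * dd Q x)%N =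
  (\sum_(p1 in P) \sum_(p2 in P) \sum_(q1 in Q) \sum_(q2 in Q)
     ((p1 - p2)%R == (q1 - q2)%R))%N.
Proof.
have e : forall x, (dd P x * dd Q x =
   \sum_(p1 in P) \sum_(p2 in P) \sum_(q1 in Q) \sum_(q2 in Q)
     (((p1 - p2)%R == x) * ((q1 - q2)%R == x)))%N.
  move=> x; rewrite /dd big_distrl; apply: eq_bigr => p1 _.
  rewrite big_distrl; apply: eq_bigr => p2 _.
  rewrite big_distrr; apply: eq_bigr => q1 _.
  by rewrite big_distrr; apply: eq_bigr => q2 _.
under eq_bigr do rewrite e.
rewrite exchange_big; apply: eq_bigr => p1 _.
rewrite exchange_big; apply: eq_bigr => p2 _.
rewrite exchange_big; apply: eq_bigr => q1 _.
rewrite exchange_big; apply: eq_bigr => q2 _.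
exact: sumx_eq.
Qed.

Lemma energy_dd (F : finFieldType) (U : {set F}) :
  energy U = (\sum_x dd U x * dd U x)%N.
Proof.
rewrite energyE sum_dd; apply: eq_bigr => u1 _.
rewrite [RHS]exchange_big /=; under [RHS]eq_bigr do rewrite exchange_big.
rewrite [RHS]exchange_big /=.
apply: eq_bigr => b _; apply: eq_bigr => c _; apply: eq_bigr => d _.
have -> : ((u1 - d)%R == (c - b)%R) = ((u1 + b)%R == (c + d)%R) => //.
rewrite -subr_eq0 -[RHS]subr_eq0.
have -> : (u1 - d - (c - b) = u1 + b - (c + d))%R by ring.
by [].
Qed.

Lemma NN_dd (F : finFieldType) (B C : {set F}) :
  (\sum_(b in B) \sum_(c in C) \sum_(b' in B) \sum_(c' in C)
    ((b + c)%R == (b' + c')%R))%N = (\sum_x dd B x * dd C x)%N.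
Proof.
rewrite sum_dd; apply: eq_bigr => b _.
rewrite exchange_big /=; apply: eq_bigr => b' _.
rewrite exchange_big /=; apply: eq_bigr => c' _.
apply: eq_bigr => c _.
have -> : ((b - b')%R == (c' - c)%R) = ((b + c)%R == (b' + c')%R) => //.
rewrite -subr_eq0 -[RHS]subr_eq0.
have -> : (b - b' - (c' - c) = b + c - (b' + c'))%R by ring.
by [].
Qed.

Lemma step3 (F : finFieldType) (B C : {set F}) :
  ((NN B C) ^ 2 <= energy B * energy C)%N.
Proof.
rewrite /NN NN_dd !energy_dd.
have := @cs _ _ xpredT (fun x => (dd B x)%:R : algC) (fun x => (dd C x)%:R)
   (fun _ => ler0n _ _) (fun _ => ler0n _ _).
rewrite -(eq_bigr _ (fun x _ => natrM _ _ _)) -natr_sum.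
rewrite -(eq_bigr _ (fun x _ => natrX _ _ _)) -natr_sum.
rewrite -(eq_bigr _ (fun x _ => natrX _ _ _)) -natr_sum.
rewrite -natrX -natrM ler_nat.
move=> h; apply: leq_trans h _; apply: eq_leq; congr (_ * _)%N; by apply: eq_bigr => x _; rewrite mulnn.
Qed.

Lemma sqrtC4 (x : algC) : sqrtC x ^+ 4 = x ^+ 2.
Proof. by rewrite -[4%N]/(2 * 2)%N exprM sqrtCK. Qed.

Theorem lemma4p1 (F : finFieldType) (A B C : {set F}) (psi : F -> algC) :
  additive_character psi -> nontrivial_character psi ->
  `|S_psi psi A B C| <=
    sqrtC (#|A|%:R) * sqrtC (sqrtC ((energy B)%:R)) * sqrtC (sqrtC ((energy C)%:R))
    * sqrtC (#|F|%:R).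
Proof.
move=> hpsi hnt.
set S := S_psi psi A B C.
have hSdef : S = \sum_(a in A) T psi B C a by [].
have h1 : `|S| ^+ 2 <= #|A|%:R * (#|F|%:R * (NN B C)%:R).
  have hn : `|S| <= \sum_(a in A) `|T psi B C a| by rewrite hSdef ler_norm_sum.
  apply: le_trans (_ : (\sum_(a in A) `|T psi B C a|) ^+ 2 <= _).
    by rewrite ler_pXn2r // nnegrE ?normr_ge0 ?sumr_ge0.
  have := @cs _ _ (mem A) (fun _ => 1 : algC) (fun a => `|T psi B C a|)
     (fun _ => ler01) (fun _ => normr_ge0 _).
  under eq_bigr do rewrite mul1r.
  move=> /le_trans; apply.
  under eq_bigr do rewrite expr1n.
  rewrite sumr_const; apply: ler_wpM2l; first exact: ler0n.
  apply: le_trans _ (@step2 F psi B C hpsi hnt).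
  rewrite [X in _ <= X](bigID (mem A)) /= lerDl.
  by apply: sumr_ge0 => a _; rewrite exprn_ge0.
have h3 := step3 B C.
have hR : 0 <= sqrtC (#|A|%:R) * sqrtC (sqrtC ((energy B)%:R)) *
    sqrtC (sqrtC ((energy C)%:R)) * sqrtC (#|F|%:R :> algC).
  by rewrite !mulr_ge0 ?sqrtC_ge0 ?ler0n.
rewrite -(@ler_pXn2r _ 4) // ?nnegrE ?normr_ge0 //.
have -> : `|S| ^+ 4 = (`|S| ^+ 2) ^+ 2 by rewrite -exprM.
rewrite !exprMn !sqrtC4 !sqrtCK.
apply: le_trans (_ : (#|A|%:R * (#|F|%:R * (NN B C)%:R)) ^+ 2 <= _).
  by rewrite -expr2 ler_pXn2r // nnegrE ?exprn_ge0 ?normr_ge0 ?mulr_ge0 ?ler0n.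
rewrite -!natrM -!natrX -!natrM ler_nat.
apply: leq_trans (_ : (#|A| ^ 2 * (#|F| ^ 2 * (energy B * energy C)) <= _)%N).
  by rewrite !expnMn leq_mul2l leq_mul2l h3 !orbT.
apply: eq_leq; ring.

Qed.
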